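(* Let $\mathbb{T}$ be a geometric theory over $\Sigma$. If $\mathbb{T}$ has enough models, then $\mathbb{T}$ has enough $\mathbb{S}$-indexed models, i.e.\ every geometric sequent over $\Sigma$ which is true in all $\mathbb{T}$-models in $M_\Sigma$ is provable in $\mathbb{T}$.
   Context: $\Sigma$ is a single-sorted first-order signature with equality, $\kappa\geq|\Sigma|+\aleph_0$ is an infinite cardinal, and $\mathbb{S}$ is a fixed set of cardinality at least $\kappa$. $M_\Sigma$ is the set of $\Sigma$-structures whose underlying set is a quotient of a subset of $\mathbb{S}$ ($\mathbb{S}$-indexed structures). A geometric theory has enough models if every geometric sequent true in all its (set-based) models is provable in it. *)

(* Defs.v *)
From mathcomp Require Import all_boot.

Set Implicit Arguments.
Unset Strict Implicit.
Unset Printing Implicit Defensive.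

Record signature := Signature {
  Fsym : Type;                 (* function symbols (constants = arity 0) *)
  Rsym : Type;
  farity : Fsym -> nat;
  rarity : Rsym -> nat }.

Definition card_le (A B : Type) : Prop := exists f : A -> B, injective f.

Section Geometric.
Variable Sg : signature.

Inductive term (n : nat) : Type :=
| Var : 'I_n -> term n
| App : forall f : Fsym Sg, ('I_(farity f) -> term n) -> term n.
Arguments Var {n} _ : assert.
Arguments App {n} f _ : assert.

Inductive form : nat -> Type :=
| FTop n : form n
| FEq n : term n -> term n -> form n
| FRel n (r : Rsym Sg) : ('I_(rarity r) -> term n) -> form n
| FAnd n : form n -> form n -> form n
| FDisj n (I : Type) : (I -> form n) -> form n
| FEx n : form n.+1 -> form n.
Arguments FRel {n} r _ : assert.

Definition FBot n : form n := @FDisj n False (fun x => match x with end).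

Fixpoint tsubst n m (s : 'I_n -> term m) (t : term n) : term m :=
  match t with
  | Var i => s i
  | App f a => App f (fun k => tsubst s (a k))
  end.

Definition shift n : 'I_n -> term n.+1 := fun k => Var (lift ord0 k).

Definition up n m (s : 'I_n -> term m) : 'I_n.+1 -> term m.+1 :=
  fun i => match unlift ord0 i with
           | None => Var ord0
           | Some j => tsubst (@shift m) (s j)
           end.

Fixpoint fsubst n (phi : form n) : forall m, ('I_n -> term m) -> form m :=
  match phi in form n return forall m, ('I_n -> term m) -> form m with
  | FTop _ => fun m _ => FTop m
  | FEq _ t u => fun m s => FEq (tsubst s t) (tsubst s u)
  | FRel _ r a => fun m s => FRel r (fun k => tsubst s (a k))
  | FAnd _ p q => fun m s => FAnd (fsubst p s) (fsubst q s)
  | FDisj _ J f => fun m s => FDisj (fun i => fsubst (f i) s)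
  | FEx _ p => fun m s => FEx (fsubst p (up s))
  end.

(* weakening: add a fresh variable (index 0) to the context *)
Definition wk n (phi : form n) : form n.+1 := fsubst phi (@shift n).

Definition eqs n m (s t : 'I_n -> term m) : form m :=
  foldr (fun i acc => FAnd (FEq (s i) (t i)) acc) (FTop m) (enum 'I_n).

Record sequent := Seq { sctx : nat; sante : form sctx; ssucc : form sctx }.

Definition theory := sequent -> Prop.

(* deduction system of geometric logic (Johnstone, Elephant D1.3.1) *)
Inductive provable (T : theory) : forall n, form n -> form n -> Prop :=
| pr_ax (s : sequent) : T s -> provable T (sante s) (ssucc s)
| pr_id n (p : form n) : provable T p p
| pr_subst n m (s : 'I_n -> term m) (p q : form n) :
    provable T p q -> provable T (fsubst p s) (fsubst q s)
| pr_cut n (p q r : form n) :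
    provable T p q -> provable T q r -> provable T p r
| pr_eq_refl n (i : 'I_n) : provable T (FTop n) (FEq (Var i) (Var i))
| pr_eq_repl n m (p : form n) (s t : 'I_n -> term m) :
    provable T (FAnd (eqs s t) (fsubst p s)) (fsubst p t)
| pr_top n (p : form n) : provable T p (FTop n)
| pr_and_l n (p q : form n) : provable T (FAnd p q) p
| pr_and_r n (p q : form n) : provable T (FAnd p q) q
| pr_and_intro n (p q r : form n) :
    provable T p q -> provable T p r -> provable T p (FAnd q r)
| pr_disj_intro n (I : Type) (f : I -> form n) (i : I) :
    provable T (f i) (FDisj f)
| pr_disj_elim n (I : Type) (f : I -> form n) (q : form n) :
    (forall i, provable T (f i) q) -> provable T (FDisj f) q
| pr_ex_elim n (p : form n.+1) (q : form n) :
    provable T p (wk q) -> provable T (FEx p) q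
| pr_ex_intro n (p : form n.+1) (q : form n) :
    provable T (FEx p) q -> provable T p (wk q)
| pr_distr n (p : form n) (I : Type) (f : I -> form n) :
    provable T (FAnd p (FDisj f)) (FDisj (fun i => FAnd p (f i)))
| pr_frob n (p : form n) (q : form n.+1) :
    provable T (FAnd p (FEx q)) (FEx (FAnd (wk p) q)).

Definition provable_seq (T : theory) (s : sequent) : Prop :=
  provable T (sante s) (ssucc s).

(* Sigma-structures (carrier may be empty) *)
Record structure := Structure {
  carrier : Type;
  fint : forall f : Fsym Sg, ('I_(farity f) -> carrier) -> carrier;
  rint : forall r : Rsym Sg, ('I_(rarity r) -> carrier) -> Prop }.

Fixpoint teval (M : structure) n (v : 'I_n -> carrier M) (t : term n)
  : carrier M :=
  match t with
  | Var i => v i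
  | App f a => @fint M f (fun k => teval v (a k))
  end.

Definition scons (X : Type) n (x : X) (v : 'I_n -> X) : 'I_n.+1 -> X :=
  fun i => match unlift ord0 i with None => x | Some j => v j end.

Fixpoint sat (M : structure) n (phi : form n) : ('I_n -> carrier M) -> Prop :=
  match phi in form n return ('I_n -> carrier M) -> Prop with
  | FTop _ => fun _ => True
  | FEq _ t u => fun v => teval v t = teval v u
  | FRel _ r a => fun v => @rint M r (fun k => teval v (a k))
  | FAnd _ p q => fun v => sat p v /\ sat q v
  | FDisj _ J f => fun v => exists i, sat (f i) v
  | FEx _ p => fun v => exists x : carrier M, sat p (scons x v)
  end.

Definition true_in (M : structure) (s : sequent) : Prop :=
  forall v : 'I_(sctx s) -> carrier M, sat (sante s) v -> sat (ssucc s) v.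

Definition is_model (M : structure) (T : theory) : Prop :=
  forall s, T s -> true_in M s.

Definition enough_models (T : theory) : Prop :=
  forall s : sequent, (forall M : structure, is_model M T -> true_in M s) ->
    provable_seq T s.

(* M is S-indexed (M in M_Sigma): its underlying set is a quotient of a
   subset of S, i.e. the surjective image of a subset of S. *)
Definition S_indexed (S : Type) (M : structure) : Prop :=
  exists (A : S -> Prop) (q : {x : S | A x} -> carrier M),
    forall y : carrier M, exists a, q a = y.

End Geometric.

(* Main.v *)
Require Import Defs.
From mathcomp Require Import all_boot.
From mathcomp Require Import boolp classical_sets.
Set Implicit Arguments.
Unset Strict Implicit.
Unset Printing Implicit Defensive.

Section Model.
Variable Sg : signature.

Fixpoint finitary n (phi : form Sg n) : Prop :=
  match phi with
  | FTop _ => True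
  | FEq _ _ _ => True
  | FRel _ _ _ => True
  | FAnd _ p q => finitary p /\ finitary q
  | FDisj _ _ _ => False
  | FEx _ p => finitary p
  end.

Inductive W (n : nat) : Type :=
| WB : 'I_n -> W n
| WF (f : Fsym Sg) : ('I_(farity f) -> W n) -> W n
| WX (m : nat) : {q : form Sg m.+1 | finitary q} -> ('I_m -> W n) -> W n.

Section Str.
Variables (M : structure Sg) (d : carrier M).

Lemma nf m (phi : form Sg m) (b : 'I_m -> carrier M) : sat phi b ->
  exists rho : form Sg m, [/\ finitary rho, sat rho b &
     forall b' : 'I_m -> carrier M, sat rho b' -> sat phi b'].
Proof.
elim: phi b => {m}.
- by move=> m b _; exists (@FTop Sg m).
- by move=> m t u b H; exists (FEq t u).
- by move=> m r a b H; exists (FRel a).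
- move=> m p IHp q IHq b [Hp Hq].
  have [rp [fp sp ip]] := IHp b Hp; have [rq [fq sq iq]] := IHq b Hq.
  exists (FAnd rp rq); split => //= b' [H1 H2]; split; [exact: ip|exact: iq].
- move=> m I f IH b [i Hi]; have [r [fr sr ir]] := IH i b Hi.
  by exists r; split => // b' /ir H; exists i.
- move=> m p IH b [y Hy]; have [r [fr sr ir]] := IH _ Hy.
  exists (FEx r); split => //=; first by exists y.
  by move=> b' [y' Hy']; exists y'; exact: ir.
Qed.

Definition wit m (phi : form Sg m.+1) (b : 'I_m -> carrier M) : carrier M :=
  match pselect (exists y, sat phi (scons y b)) with
  | left h => proj1_sig (cid h)
  | right _ => d
  end.

Lemma witP m (phi : form Sg m.+1) b :
  (exists y, sat phi (scons y b)) -> sat phi (scons (wit phi b) b).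
Proof. by rewrite /wit; case: pselect => // h _; exact: proj2_sig (cid h). Qed.

Variables (n : nat) (v : 'I_n -> carrier M).

Fixpoint ev (w : W n) : carrier M :=
  match w with
  | WB i => v i
  | WF f a => @fint _ M f (fun k => ev (a k))
  | WX m phi a => wit (proj1_sig phi) (fun k => ev (a k))
  end.

Definition Nc := {x : carrier M | exists w : W n, ev w = x}.

Definition wof (x : Nc) : W n := proj1_sig (cid (proj2_sig x)).
Lemma wofP x : ev (wof x) = proj1_sig x.
Proof. exact: proj2_sig (cid (proj2_sig x)). Qed.

Lemma Nf_proof f (args : 'I_(farity f) -> Nc) :
  exists w : W n, ev w = @fint _ M f (fun k => proj1_sig (args k)).
Proof.
exists (WF (fun k => wof (args k))) => /=.
by congr (fint _); apply: funext => k; exact: wofP.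
Qed.

Definition Nf f (args : 'I_(farity f) -> Nc) : Nc :=
  exist _ _ (Nf_proof args).

Definition Nr r (args : 'I_(rarity r) -> Nc) : Prop :=
  @rint _ M r (fun k => proj1_sig (args k)).

Definition N : structure Sg := @Structure Sg Nc Nf Nr.

Lemma teval_N m (a : 'I_m -> Nc) (t : term Sg m) :
  proj1_sig (@teval _ N m a t) = teval (fun k => proj1_sig (a k)) t.
Proof.
elim: t => //= f args IH.
by congr (fint _); apply: funext => k; exact: IH.
Qed.

Lemma scons_val m (x : Nc) (a : 'I_m -> Nc) :
  (fun i => proj1_sig (scons x a i)) = scons (proj1_sig x) (fun i => proj1_sig (a i)).
Proof. by apply: funext => i; rewrite /scons; case: unlift. Qed.

Lemma sat_up m (phi : form Sg m) (a : 'I_m -> Nc) :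
  @sat _ N m phi a -> sat phi (fun k => proj1_sig (a k)).
Proof.
elim: phi a => {m}.
- by [].
- by move=> m t u a /=; rewrite -!teval_N => ->.
- move=> m r args a /=; rewrite /Nr => H.
  by have <- : (fun k => proj1_sig (@teval _ N m a (args k))) =
               (fun k => teval (fun k0 => proj1_sig (a k0)) (args k))
    by apply: funext => k; exact: teval_N.
- by move=> m p IHp q IHq a [H1 H2]; split; [exact: IHp|exact: IHq].
- by move=> m I f IH a [i Hi]; exists i; exact: IH.
- move=> m p IH a [x Hx]; exists (proj1_sig x).
  by rewrite -scons_val; exact: IH.
Qed.

Lemma sat_down m (phi : form Sg m) (a : 'I_m -> Nc) :
  sat phi (fun k => proj1_sig (a k)) -> @sat _ N m phi a.
Proof.
elim: phi a => {m}.
- by [].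
- by move=> m t u a /=; rewrite -!teval_N => H; apply: eq_sig_hprop => //.
- move=> m r args a /= H; rewrite /Nr.
  by have -> : (fun k => proj1_sig (@teval _ N m a (args k))) =
               (fun k => teval (fun k0 => proj1_sig (a k0)) (args k))
    by apply: funext => k; exact: teval_N.
- by move=> m p IHp q IHq a [H1 H2]; split; [exact: IHp|exact: IHq].
- by move=> m I f IH a [i Hi]; exists i; exact: IH.
- move=> m p IH a [y Hy].
  have [r [fr sr ir]] := nf Hy.
  pose w := WX (exist _ r fr) (fun k => wof (a k)).
  have Ew : ev w = wit r (fun k => proj1_sig (a k)).
    rewrite /=; congr (wit _); apply: funext => k; exact: wofP.
  exists (exist _ (ev w) (ex_intro _ w erefl)).
  apply: IH; rewrite scons_val.
  have -> : proj1_sig (exist (fun x => exists w, ev w = x) (ev w) (ex_intro _ w erefl)) = wit r (fun k => proj1_sig (a k)) by exact: Ew.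
  apply: ir; apply: witP.
  by exists y.
Qed.

End Str.
End Model.


Section Enc.
Variables (Sg : signature) (K : Type) (e : nat -> K) (kf : Fsym Sg -> K)
  (kr : Rsym Sg -> K) (pr : K -> K -> K).
Hypotheses (einj : injective e) (kfinj : injective kf) (krinj : injective kr)
  (prinj : forall x y x' y', pr x y = pr x' y' -> x = x' /\ y = y').

Fixpoint encl (s : seq K) : K :=
  match s with
  | [::] => pr (e 0) (e 0)
  | x :: s => pr (e 1) (pr x (encl s))
  end.

Lemma encl_inj : injective encl.
Proof.
elim=> [|x s IH] [|y t] //=.
- by case/prinj => /einj.
- by case/prinj => /einj.
- by case/prinj => _ /prinj [-> /IH ->].
Qed.

Definition encf k (F : 'I_k -> K) := encl (map F (enum 'I_k)).

Lemma encf_inj k (F G : 'I_k -> K) : encf F = encf G -> forall i, F i = G i.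
Proof.
move/encl_inj/eq_in_map => H i; apply: H; exact: mem_enum.
Qed.

Fixpoint et n (t : term Sg n) : K :=
  match t with
  | Var i => pr (e 0) (e i)
  | App f a => pr (e 1) (pr (kf f) (encf (fun k => et (a k))))
  end.

Lemma et_inj n : injective (@et n).
Proof.
elim=> [i|f a IH] [j|g b] /=.
- by case/prinj => _ /einj /ord_inj ->.
- by case/prinj => /einj.
- by case/prinj => /einj.
- case/prinj => _ /prinj [/kfinj E]; subst g => /encf_inj H.
  by have -> : a = b by apply: funext => k; apply: IH; apply: H.
Qed.

Fixpoint ef n (phi : form Sg n) : K :=
  match phi with
  | FTop _ => pr (e 0) (e 0)
  | FEq _ t u => pr (e 1) (pr (et t) (et u))
  | FRel _ r a => pr (e 2) (pr (kr r) (encf (fun k => et (a k))))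
  | FAnd _ p q => pr (e 3) (pr (ef p) (ef q))
  | FDisj _ _ _ => pr (e 4) (e 0)
  | FEx _ p => pr (e 5) (ef p)
  end.

Lemma ef_inj n (phi psi : form Sg n) : finitary phi -> finitary psi ->
  ef phi = ef psi -> phi = psi.
Proof.
revert psi; induction phi as [n|n t u|n r a|n p IHp q IHq|n I f IH|n p IH];
  intros psi fp; destruct psi as [n|n t' u'|n r' a'|n p' q'|n I' f'|n p'];
  simpl; intros fq E; destruct (prinj E) as [E1 E2]; apply einj in E1;
  try discriminate E1.
- by [].
- by case/prinj: E2 => /(@et_inj _) -> /(@et_inj _) ->.
- case/prinj: E2 => /krinj Er; subst r' => /encf_inj H.
  by have -> : a = a' by apply: funext => k; apply: et_inj; apply: H.
- case: fp => fp1 fp2; case: fq => fq1 fq2.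
  by case/prinj: E2 => /IHp -> // /IHq -> //.
- by case: fp.
- by rewrite (IH p' fp fq E2).
Qed.

Fixpoint ew n (w : W Sg n) : K :=
  match w with
  | WB i => pr (e 0) (e i)
  | WF f a => pr (e 1) (pr (kf f) (encf (fun k => ew (a k))))
  | WX m phi a => pr (e 2) (pr (e m) (pr (ef (proj1_sig phi)) (encf (fun k => ew (a k)))))
  end.

Lemma ew_inj n : injective (@ew n).
Proof.
elim=> [i|f a IH|m [phi fphi] a IH] [j|g b|m' [psi fpsi] b] /=;
  case/prinj => /einj E1 E2; try discriminate E1.
- by move/einj/ord_inj: E2 => ->.
- case/prinj: E2 => /kfinj E; subst g => /encf_inj H.
  by have -> : a = b by apply: funext => k; apply: IH; apply: H.
- case/prinj: E2 => /einj E; subst m' => /prinj [/ef_inj E' /encf_inj H].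
  have Ep := E' fphi fpsi; subst psi.
  have -> : a = b by apply: funext => k; apply: IH; apply: H.
  by rewrite (Prop_irrelevance fphi fpsi).
Qed.
End Enc.

Local Open Scope classical_set_scope.

Section Card.
Variable K : Type.

Definition Aof (G : set (K * K * K)) (x : K) := exists z, G ((x, x), z).

Definition good (G : set (K * K * K)) :=
  [/\ (forall p z z', G (p, z) -> G (p, z') -> z = z'),
      (forall p p' z, G (p, z) -> G (p', z) -> p = p'),
      (forall x y, Aof G x -> Aof G y -> exists z, G ((x, y), z)) &
      (forall x y z, G ((x, y), z) -> [/\ Aof G x, Aof G y & Aof G z])].

Lemma Aof_mono (G H : set (K*K*K)) x : G `<=` H -> Aof G x -> Aof H x.
Proof. by move=> GH [z Gz]; exists z; apply: GH. Qed.

Lemma good_chain (F : set (set (K*K*K))) :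
  (forall G, F G -> good G) -> total_on F subset ->
  good (\bigcup_(G in F) G).
Proof.
move=> Fg tot; split.
- move=> p z z' [G1 F1 G1z] [G2 F2 G2z].
  case: (tot _ _ F1 F2) => S12.
  + by case: (Fg _ F2) => h _ _ _; apply: (h p); [apply: S12|].
  + by case: (Fg _ F1) => h _ _ _; apply: (h p); [|apply: S12].
- move=> p p' z [G1 F1 G1z] [G2 F2 G2z].
  case: (tot _ _ F1 F2) => S12.
  + by case: (Fg _ F2) => _ h _ _; apply: (h p p' z); [apply: S12|].
  + by case: (Fg _ F1) => _ h _ _; apply: (h p p' z); [|apply: S12].
- move=> x y [zx [G1 F1 G1x]] [zy [G2 F2 G2y]].
  have key : forall G, F G -> G1 `<=` G -> G2 `<=` G ->
      exists z, (\bigcup_(G in F) G) ((x, y), z).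
    move=> G FG S1 S2; case: (Fg _ FG) => _ _ h _.
    have [z Gz] := h x y (ex_intro _ zx (S1 _ G1x)) (ex_intro _ zy (S2 _ G2y)).
    by exists z; exists G.
  case: (tot _ _ F1 F2) => S12.
  + by apply: (key G2 F2) => //.
  + by apply: (key G1 F1) => //.
- move=> x y z [G1 F1 G1z]; case: (Fg _ F1) => _ _ _ h.
  have [a b c] := h _ _ _ G1z.
  have sub : G1 `<=` \bigcup_(G in F) G by move=> q Gq; exists G1.
  by split; apply: (Aof_mono sub).
Qed.


Lemma choice_on (A B : Type) (b0 : B) (P : A -> Prop) (R : A -> B -> Prop) :
  (forall a, P a -> exists b, R a b) -> exists f : A -> B, forall a, P a -> R a (f a).
Proof.
move=> h.
exists (fun a => match pselect (exists b, R a b) with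
                 | left e => proj1_sig (cid e) | right _ => b0 end).
move=> a Pa; case: pselect => [e|ne]; first exact: proj2_sig (cid e).
by case: ne; apply: h.
Qed.

Lemma compar (U V : set K) (k0 : K) :
 (exists h : K -> K, (forall x, U x -> V (h x)) /\
     (forall x y, U x -> U y -> h x = h y -> x = y)) \/
 (exists h : K -> K, (forall x, V x -> U (h x)) /\
     (forall x y, V x -> V y -> h x = h y -> x = y)).
Proof.
pose Pi (H : set (K*K)) := (forall x y, H (x,y) -> U x /\ V y) /\
  (forall x y y', H (x,y) -> H (x,y') -> y = y') /\
  (forall x x' y, H (x,y) -> H (x',y) -> x = x').
have [H [[HUV [Hf Hi]] Hmax]] : exists H, Pi H /\ forall B, H `<` B -> ~ Pi B.
  apply: Zorn_bigcup => F FP tot; split; [|split].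
  - by move=> x y [G FG Gxy]; exact: (FP _ FG).1 _ _ Gxy.
  - move=> x y y' [G1 F1 G1y] [G2 F2 G2y]; case: (tot _ _ F1 F2) => S.
    + exact: (FP _ F2).2.1 x y y' (S _ G1y) G2y.
    + exact: (FP _ F1).2.1 x y y' G1y (S _ G2y).
  - move=> x x' y [G1 F1 G1y] [G2 F2 G2y]; case: (tot _ _ F1 F2) => S.
    + exact: (FP _ F2).2.2 x x' y (S _ G1y) G2y.
    + exact: (FP _ F1).2.2 x x' y G1y (S _ G2y).
case: (pselect (forall x, U x -> exists y, H (x,y))) => [allU|nU].
  left; have [h hh] := choice_on k0 allU; exists h; split.
    by move=> x Ux; exact: (HUV _ _ (hh x Ux)).2.
  move=> x y Ux Uy e; apply: (Hi x y (h x)); first exact: hh.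
  by rewrite e; exact: hh.
case: (pselect (forall y, V y -> exists x, H (x,y))) => [allV|nV].
  right; have [h hh] := choice_on (R := fun y x => H (x,y)) k0 allV.
  exists h; split.
    by move=> y Vy; exact: (HUV _ _ (hh y Vy)).1.
  move=> x y Vx Vy e; apply: (Hf (h x)); first exact: hh.
  by rewrite e; exact: hh.
exfalso.
have [x0 [Ux0 nx0]] : exists x, U x /\ ~ (exists y, H (x,y)).
  apply: contrapT => nE; apply: nU => x Ux; apply: contrapT => ne.
  by apply: nE; exists x.
have [y0 [Vy0 ny0]] : exists y, V y /\ ~ (exists x, H (x,y)).
  apply: contrapT => nE; apply: nV => y Vy; apply: contrapT => ne.
  by apply: nE; exists y.
apply: (Hmax (H `|` [set (x0, y0)])).
  split; first by move=> p Hp; left.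
  by move=> S; apply: nx0; exists y0; apply: S; right.
split; [|split].
- by move=> x y [Hxy|[-> ->]]; [exact: HUV|].
- move=> x y y' [Hxy|[ex ey]] [Hxy'|[ex' ey']]; subst.
  + exact: Hf Hxy Hxy'.
  + by case: nx0; exists y.
  + by case: nx0; exists y'.
  + by [].
- move=> x x' y [Hxy|[ex ey]] [Hxy'|[ex' ey']]; subst.
  + exact: Hi Hxy Hxy'.
  + by case: ny0; exists x.
  + by case: ny0; exists x'.
  + by [].
Qed.


Lemma pairing (e : nat -> K) : injective e ->
  exists p : K -> K -> K, forall x y x' y', p x y = p x' y' -> x = x' /\ y = y'.
Proof.
move=> einj.
pose G0 : set (K*K*K) := fun t => exists a b, t = ((e a, e b), e (pickle (a,b))).
have AG0 : forall a, Aof G0 (e a) by move=> a; exists (e (pickle (a,a))); exists a, a.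
have G0good : good G0.
  split.
  - move=> p z z' [a [b E]] [a' [b' E']].
    case: E => Ep Ez; case: E' => Ep' Ez'; subst.
    by case: Ep' => /einj -> /einj ->.
  - move=> p p' z [a [b E]] [a' [b' E']].
    case: E => Ep Ez; case: E' => Ep' Ez'; subst.
    by move/einj/(pcan_inj pickleK): Ez' => [-> ->].
  - move=> x y [zx [a [b E]]] [zy [c [d E']]].
    case: E => ex _ _; case: E' => ey _ _; subst.
    by exists (e (pickle (a, c))); exists a, c.
  - move=> x y z [a [b E]]; case: E => -> -> ->; split; exact: AG0.
pose P G := good G /\ (G = set0 \/ G0 `<=` G).
have [G [[Gg G0G] Gmax]] : exists G, P G /\ forall B, G `<` B -> ~ P B.
  apply: Zorn_bigcup => F FP tot; split.
    by apply: good_chain => // G /FP [].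
  case: (pselect (exists G, F G /\ G0 `<=` G)) => [[G [FG sub]]|nG]; [right|left].
    by move=> t G0t; exists G => //; exact: sub.
  apply/seteqP; split => // t [G FG Gt].
  case: (FP _ FG) => _ [E|sub]; first by rewrite E in Gt.
  by case: nG; exists G.
have sub : G0 `<=` G.
  case: G0G => // E; exfalso; apply: (Gmax G0); last by split => //; right.
  split; first by rewrite E.
  by move=> S; have [z Hz] := AG0 0; have := S _ Hz; rewrite E.
case: Gg => Gf Gi Gd Gc.
pose A := Aof G.
have Ae : forall a, A (e a) := fun a => Aof_mono sub (AG0 a).
have [g hg] : exists g : K*K -> K, forall pr, A pr.1 /\ A pr.2 -> G (pr, g pr).
  apply: (choice_on (e 0) (P := fun pr => A pr.1 /\ A pr.2) (R := fun pr z => G (pr, z))).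
  by move=> [x y] [Ax Ay]; exact: Gd.
have gA : forall x y, A x -> A y -> A (g (x,y)).
  by move=> x y Ax Ay; case: (Gc _ _ _ (hg (x,y) (conj Ax Ay))).
have ginj : forall x y x' y', A x -> A y -> A x' -> A y' ->
    g (x,y) = g (x',y') -> x = x' /\ y = y'.
  move=> x y x' y' Ax Ay Ax' Ay' E.
  move: (hg (x,y) (conj Ax Ay)); rewrite E => H1.
  by have [-> ->] : (x,y) = (x',y') := Gi _ _ _ H1 (hg (x',y') (conj Ax' Ay')).
have e01 : e 0 <> e 1 by move/einj.
case: (compar A (~` A) (e 0)) => [[h [hA hinj]] | [h [hA hinj]]];
  last first.
  pose f x := if pselect (A x) then g (x, e 0) else g (h x, e 1).
  have fA : forall x, A (f x).
    by move=> x; rewrite /f; case: pselect => Ax; apply: (gA) => //; apply: (hA).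
  have finj : injective f.
    move=> x y; rewrite /f; case: pselect => Ax; case: pselect => Ay.
    - by case/ginj => //.
    - case/ginj => //; try apply: (hA); try exact: Ay; move=> _ E; by case: e01.
    - case/ginj => //; try apply: (hA); try exact: Ax; move=> _ E; by case: e01.
    - case/ginj => //; try apply: (hA); try exact: Ax; try exact: Ay; by move=> /(hinj _ _ Ax Ay).
  exists (fun x y => g (f x, f y)) => x y x' y'.
  by case/(ginj _ _ _ _ (fA x) (fA y) (fA x') (fA y')) => /finj -> /finj ->.
exfalso.
pose B z := exists a, A a /\ z = h a.
have [hi hih] : exists hi, forall z, B z -> A (hi z) /\ z = h (hi z).
  apply: (choice_on (e 0) (P := B) (R := fun z a => A a /\ z = h a)).
  by move=> z [a [Aa ->]]; exists a.
have BnA : forall z, B z -> ~ A z by move=> z [a [Aa ->]]; exact: hA.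
pose r x := if pselect (A x) then x else hi x.
pose s x : nat := if pselect (A x) then 0 else 1.
have rA : forall x, A x \/ B x -> A (r x).
  move=> x Hx; rewrite /r; case: pselect => // nAx.
  by case: Hx => // /hih [].
have s01 : forall x, s x = 0 \/ s x = 1 by move=> x; rewrite /s; case: pselect; auto.
have rsinj : forall x y, A x \/ B x -> A y \/ B y -> r x = r y -> s x = s y -> x = y.
  move=> x y Hx Hy; rewrite /r /s; case: pselect => Ax; case: pselect => Ay /=.
  - by [].
  - by move=> _ /esym.
  - by move=> _.
  case: Hx => // /hih [_ ex]; case: Hy => // /hih [_ ey] E _.
  by rewrite ex ey E.
pose F x y := h (g (g (r x, r y), e (s x + 2 * s y))).
have FA : forall x y, A x \/ B x -> A y \/ B y -> A (g (g (r x, r y), e (s x + 2 * s y))).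
  by move=> x y Hx Hy; apply: (gA) => //; apply: (gA); apply: (rA).
have FB : forall x y, A x \/ B x -> A y \/ B y -> B (F x y).
  by move=> x y Hx Hy; exists (g (g (r x, r y), e (s x + 2 * s y))); split => //; apply: (FA).
pose nw : set (K*K*K) := fun t => exists x y, (A x \/ B x) /\ (A y \/ B y) /\
   ~ (A x /\ A y) /\ t = ((x,y), F x y).
pose G' := G `|` nw.
have GG' : G `<=` G' by move=> t Gt; left.
have A'P : forall x, Aof G' x <-> A x \/ B x.
  move=> x; split.
    move=> [z [Gz|[x1 [y1 [Hx [Hy [_ E]]]]]]]; first by left; exists z.
    by case: E => -> _ _.
  case=> [Ax|Bx]; first exact: Aof_mono GG' Ax.
  exists (F x x); right; exists x, x.
  by split; [right|split; [right|split; [case=> /(BnA _ Bx)|]]].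
apply: (Gmax G').
  split => // S.
  have Bh : B (h (e 0)) by exists (e 0).
  have : G' ((h (e 0), h (e 0)), F (h (e 0)) (h (e 0))).
    right; exists (h (e 0)), (h (e 0)).
    by split; [right|split; [right|split; [case=> /(BnA _ Bh)|]]].
  by move/S => Gx; apply: (BnA _ Bh); exists (F (h (e 0)) (h (e 0))).
split; last by right; move=> t /sub Gt; left.
split.
- move=> p z z' [Gz|[x[y[Hx[Hy[nA E]]]]]] [Gz'|[x'[y'[Hx'[Hy'[nA' E']]]]]].
  + exact: Gf Gz Gz'.
  + case: E' => ep _; subst p.
    by case: (Gc _ _ _ Gz) => Ax Ay _; case: nA'.
  + case: E => ep _; subst p.
    by case: (Gc _ _ _ Gz') => Ax Ay _; case: nA.
  + case: E => ep ez; case: E' => ep' ez'; subst.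
    by case: ep' => -> ->.
- move=> [px py] [px' py'] z [Gz|[x[y[Hx[Hy[nA E]]]]]] [Gz'|[x'[y'[Hx'[Hy'[nA' E']]]]]].
  + exact: Gi Gz Gz'.
  + case: E' => ? ? ez; subst.
    by case: (Gc _ _ _ Gz) => _ _ Az; exfalso; apply: (BnA _ (FB _ _ Hx' Hy')).
  + case: E => ? ? ez; subst.
    by case: (Gc _ _ _ Gz') => _ _ Az; exfalso; apply: (BnA _ (FB _ _ Hx Hy)).
  + case: E => ? ? ez; case: E' => ? ? ez'; subst.
    move: ez' => /(hinj _ _ (FA _ _ Hx Hy) (FA _ _ Hx' Hy')).
    case/ginj; try apply: (gA); try apply: (rA); try apply: (Ae); try done.
    case/ginj; try apply: (rA); try done.
    move=> erx ery /einj es.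
    have [esx esy] : s x = s x' /\ s y = s y'.
      by case: (s01 x) es => ->; case: (s01 y) => ->; case: (s01 x') => ->;
        case: (s01 y') => ->.
    by rewrite (rsinj _ _ Hx Hx' erx esx) (rsinj _ _ Hy Hy' ery esy).
- move=> x y /A'P Hx /A'P Hy.
  case: (pselect (A x /\ A y)) => [[Ax Ay]|nA].
    by have [z Gz] := Gd _ _ Ax Ay; exists z; left.
  by exists (F x y); right; exists x, y.
- move=> x y z [Gz|[x1[y1[Hx[Hy[nA E]]]]]].
    by case: (Gc _ _ _ Gz) => Ax Ay Az; split; apply: Aof_mono GG' _.
  case: E => ex ey ez; subst.
  by split; apply/A'P => //; right; apply: (FB).
Qed.
End Card.

Theorem lemma2p1 (Sg : signature) (K S : Type)
  (hK_inf : card_le nat K)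
  (hK_sig : card_le (Fsym Sg + Rsym Sg) K)
  (hS : card_le K S)
  (T : theory Sg) :
  enough_models T ->
  forall s : sequent Sg,
    (forall M : structure Sg, S_indexed S M -> is_model M T -> true_in M s) ->
    provable_seq T s.
Proof.
move=> hEM s H; apply: hEM => M hM v hante.
case: (pselectT (carrier M)) => [emp|d].
  apply: (H M _ hM v hante).
  exists (fun _ => False), (fun a => False_rect _ (proj2_sig a)).
  by move=> y; case: (emp y).
have [e einj] := hK_inf; have [k kinj] := hK_sig; have [j jinj] := hS.
have [pr prinj] := pairing einj.
have kfinj : injective (fun f => k (inl f)) by move=> f g /kinj [].
have krinj : injective (fun r => k (inr r)) by move=> f g /kinj [].
pose code (w : W Sg (sctx s)) := j (ew e (fun f => k (inl f)) (fun r => k (inr r)) pr w).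
have codeinj : injective code.
  by move=> w w' /jinj /(ew_inj einj kfinj krinj prinj).
pose NN := N d v.
pose vN : 'I_(sctx s) -> carrier NN := fun i => exist _ (v i) (ex_intro _ (WB Sg i) erefl).
have NM : is_model NN T.
  move=> s' Ts' u /(@sat_up _ M d _ v) hu; apply: sat_down; exact: hM s' Ts' _ hu.
have SN : S_indexed S NN.
  exists (fun x => exists w, code w = x).
  exists (fun a : {x : S | exists w, code w = x} => let w := proj1_sig (cid (proj2_sig a)) in
            exist (fun x => exists w, ev d v w = x) (ev d v w) (ex_intro _ w erefl)).
  move=> y.
  exists (exist (fun x => exists w, code w = x) (code (wof y)) (ex_intro _ (wof y) erefl)).
  apply: eq_sig_hprop; first by move=> x p q; exact: Prop_irrelevance.
  rewrite /= -(wofP y); congr (ev d v _).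
  apply: codeinj.
  exact: (proj2_sig (cid (ex_intro (fun w => code w = code (wof y)) (wof y) erefl))).
have := H NN SN NM vN (@sat_down _ M d _ v _ _ vN hante).
by move/(@sat_up _ M d _ v).
Qed.
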